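(* Let $\mu\in\mathbb{R}$ and $\nu>0$ be constants, and let $G$ be one of the functions $$G_1(t)=\frac{1+(t/2+\mu)^2}{1+(t+\mu)^2},\qquad G_2(t)=\frac{(t/2+\nu)^2}{(t+\nu)^2}.$$ Let $\alpha\in(\frac12,1)$. If $t>0$ and $G(t)\ge\alpha$, then $G(t')>\alpha$ for every $0<t'<t$. *)

(* Defs.v *)
From Stdlib Require Import Reals Lra.
Open Scope R_scope.

Definition G1 (mu t : R) : R := (1 + (t/2 + mu)^2) / (1 + (t + mu)^2).
Definition G2 (nu t : R) : R := (t/2 + nu)^2 / (t + nu)^2.

Definition level_prop (G : R -> R) : Prop :=
  forall alpha : R, 1/2 < alpha < 1 ->
  forall t : R, 0 < t -> G t >= alpha ->
  forall t' : R, 0 < t' < t -> G t' > alpha.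

(* Main.v *)
Require Import Defs.
From Stdlib Require Import Reals Lra Psatz.
Open Scope R_scope.

Lemma g1_part (mu : R) : level_prop (G1 mu).
Proof.
  intros alpha [Ha1 Ha2] t Ht HG t' [Ht1 Ht2].
  unfold G1 in *.
  set (f := fun s => 1 + (s/2 + mu)^2 - alpha * (1 + (s + mu)^2)).
  assert (Dt : 0 < 1 + (t + mu)^2) by (pose proof (pow2_ge_0 (t+mu)); lra).
  assert (Dt' : 0 < 1 + (t' + mu)^2) by (pose proof (pow2_ge_0 (t'+mu)); lra).
  assert (Ft : f t >= 0).
  { unfold f. apply Rge_le in HG.
    apply (Rmult_le_compat_r (1 + (t+mu)^2)) in HG; [|lra].
    unfold Rdiv in HG. rewrite Rmult_assoc, Rinv_l in HG by lra. lra. }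
  assert (F0 : f 0 > 0) by (unfold f; nra).
  assert (Id : t * f t' = (t - t') * f 0 + t' * f t + (alpha - 1/4) * t * t' * (t - t'))
    by (unfold f; field).
  assert (Pos : t * f t' > 0).
  { rewrite Id.
    assert (0 < (t - t') * f 0) by nra.
    assert (0 <= t' * f t) by nra.
    assert (0 < (alpha - 1/4) * t * t' * (t - t')).
    { repeat apply Rmult_lt_0_compat; lra. }
    lra. }
  assert (Fp : f t' > 0) by nra.
  unfold f in Fp.
  apply Rlt_gt. apply (Rmult_lt_reg_r (1 + (t'+mu)^2)); [lra|].
  unfold Rdiv. rewrite Rmult_assoc, Rinv_l by lra. lra.
Qed.

Lemma g2_part (nu : R) (hnu : 0 < nu) : level_prop (G2 nu).
Proof.
  intros alpha [Ha1 Ha2] t Ht HG t' [Ht1 Ht2].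
  unfold G2 in *.
  assert (Hc : (t'/2+nu)*(t+nu) - (t/2+nu)*(t'+nu) = nu*(t-t')/2) by field.
  assert (H1 : (t'/2+nu)*(t+nu) > (t/2+nu)*(t'+nu)) by nra.
  assert (H2 : ((t'/2+nu)*(t+nu))^2 > ((t/2+nu)*(t'+nu))^2).
  { assert (0 < (t/2+nu)*(t'+nu)) by nra. nra. }
  assert (Db : 0 < (t+nu)^2) by nra.
  assert (Db' : 0 < (t'+nu)^2) by nra.
  assert (Hlt : (t/2 + nu)^2 / (t + nu)^2 < (t'/2 + nu)^2 / (t' + nu)^2).
  { apply (Rmult_lt_reg_r ((t+nu)^2 * (t'+nu)^2)); [nra|].
    assert (E1 : (t/2 + nu)^2 / (t + nu)^2 * ((t+nu)^2 * (t'+nu)^2)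
      = ((t/2+nu)*(t'+nu))^2) by (field; lra).
    assert (E2 : (t'/2 + nu)^2 / (t' + nu)^2 * ((t+nu)^2 * (t'+nu)^2)
      = ((t'/2+nu)*(t+nu))^2) by (field; lra).
    rewrite E1, E2. lra. }
  lra.
Qed.

Theorem lemma3p1 (mu nu : R) (hnu : 0 < nu) :
  level_prop (G1 mu) /\ level_prop (G2 nu).
Proof.
  split; [apply g1_part | apply g2_part; exact hnu].
Qed.
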